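(* Let $\chi$ be a universal constant with the following property: for every SBM on $[n]$ with communities $S_1,\dots,S_k$ and edge probabilities $a/n>b/n$, with $L_{ij}=1$ for $i,j$ in the same community and $L_{ij}=-1$ otherwise, with probability at least $1-2/n^2$ there is $S\subseteq[n]$ with $|S|\ge(1-e^{-2C})n$ and $\|(A-\frac{a+b}{2n}J-\frac{a-b}{2n}L)_{S\times S}\|_{\mathrm{op}}\le\chi\sqrt{a+b}$. Now let $A$ be the adjacency matrix of an $\varepsilon$-corrupted semi-random SBM with edge parameters $b<a$ and communities $S_1,\dots,S_k$ partitioning $[n]$, and let $C=(\sqrt a-\sqrt b)^2$. Then with probability at least $1-2/n^2$, every optimal solution $W$ of the Initialization SDP (with inputs $A,a,b,\chi$) satisfies: (1) $\sum W_{ij}$ over pairs $(i,j)$ with $i,j$ in different communities is at most $(5\chi/\sqrt C+2\varepsilon)n^2$; (2) $\sum W_{ij}$ over pairs $(i,j)$ with $i,j$ in the same community is at least $\sum_{i=1}^k|S_i|^2-(6\chi/\sqrt C+4\varepsilon)n^2$.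
   Context: $\varepsilon$-corrupted semi-random SBM: there is an unknown partition of $[n]$ into communities $S_1,\dots,S_k$. A graph $A_0$ is sampled with all pairs independent, same-community pairs joined with probability $a/n$ and different-community pairs with probability $b/n$ (symmetric adjacency matrix, zero diagonal). An adversary then (i) arbitrarily adds edges within communities and removes edges between communities, and (ii) picks up to $\varepsilon n$ vertices and arbitrarily modifies their incident edges; $A$ is the resulting adjacency matrix. Initialization SDP: given $A,a,b,\chi$, find $n\times n$ real matrices $W,F$ with $0\le W_{ij},F_{ij}\le1$ for all $i,j$, $\|W\|_1\le n$ (trace norm, i.e. sum of singular values), and $-\chi\sqrt{a+b}\,I\preceq(A-(a/n)J-F)\odot W\preceq\chi\sqrt{a+b}\,I$ (where $X\preceq Y$ means $Y-X$ is symmetric positive semidefinite), maximizing $\sum_{i,j}W_{ij}$. $J$ is the all-ones matrix and $\odot$ the entrywise product. *)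

(* Defs.v *)
From HB Require Import structures.
From mathcomp Require Import all_boot all_order all_algebra.
From mathcomp Require Import boolp reals sequences.
Set Implicit Arguments. Unset Strict Implicit. Unset Printing Implicit Defensive.
Import Order.TTheory GRing.Theory Num.Theory.
Local Open Scope ring_scope.

Definition hadamard {R : realType} {n : nat} (X Y : 'M[R]_n) : 'M[R]_n :=
  \matrix_(i, j) (X i j * Y i j).

Definition psd {R : realType} {n : nat} (X : 'M[R]_n) : Prop :=
  X^T = X /\ forall x : 'cV[R]_n, 0 <= (x^T *m X *m x) 0 0.

Definition loewner_le {R : realType} {n : nat} (X Y : 'M[R]_n) : Prop := psd (Y - X).

Definition trace_norm_le {R : realType} {n : nat} (W : 'M[R]_n) (t : R) : Prop :=
  exists (U V : 'M[R]_n) (s : 'rV[R]_n),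
    [/\ U^T *m U = 1%:M, V^T *m V = 1%:M, (forall i, 0 <= s 0 i),
        W = U *m diag_mx s *m V^T & \sum_i s 0 i <= t].

Definition opnorm_le {R : realType} {n : nat} (M : 'M[R]_n) (t : R) : Prop :=
  0 <= t /\ forall x : 'cV[R]_n,
    \sum_i ((M *m x) i 0) ^+ 2 <= t ^+ 2 * \sum_i (x i 0) ^+ 2.

(* The S x S principal submatrix, padded with zeros (same operator norm). *)
Definition restrict {R : realType} {n : nat} (S : {set 'I_n}) (M : 'M[R]_n) : 'M[R]_n :=
  \matrix_(i, j) (if (i \in S) && (j \in S) then M i j else 0).

Definition Jmat {R : realType} (n : nat) : 'M[R]_n := const_mx 1.

Definition Lmat {R : realType} {n k : nat} (comm : 'I_n -> 'I_k) : 'M[R]_n :=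
  \matrix_(i, j) (if comm i == comm j then 1 else -1).

Definition sdp_feasible {R : realType} {n : nat} (A : 'M[R]_n) (a b chi : R)
    (W F : 'M[R]_n) : Prop :=
  let M := hadamard (A - (a / n%:R) *: Jmat n - F) W in
  [/\ (forall i j, 0 <= W i j <= 1), (forall i j, 0 <= F i j <= 1),
      trace_norm_le W n%:R,
      loewner_le (- (chi * Num.sqrt (a + b)) *: (1%:M : 'M[R]_n)) M &
      loewner_le M ((chi * Num.sqrt (a + b)) *: (1%:M : 'M[R]_n))].

Definition sdp_value {R : realType} {n : nat} (W : 'M[R]_n) : R :=
  \sum_i \sum_j W i j.

Definition sdp_optimal {R : realType} {n : nat} (A : 'M[R]_n) (a b chi : R)
    (W : 'M[R]_n) : Prop :=
  (exists F, sdp_feasible A a b chi W F) /\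
  forall W' F', sdp_feasible A a b chi W' F' -> sdp_value W' <= sdp_value W.

(* Sample space: a bit for every ordered pair; only pairs (i,j) with i < j are
   random (edge indicators), the others are a.s. false. *)
Definition sample (n : nat) := {ffun 'I_n * 'I_n -> bool}.

Definition adj_of {R : realType} {n : nat} (w : sample n) : 'M[R]_n :=
  \matrix_(i, j) (if (i < j)%N then (w (i, j))%:R
                  else if (j < i)%N then (w (j, i))%:R else 0).

Definition edge_prob {R : realType} {n k : nat} (comm : 'I_n -> 'I_k) (a b : R)
    (i j : 'I_n) : R :=
  if comm i == comm j then a / n%:R else b / n%:R.

Definition sbm_weight {R : realType} {n k : nat} (comm : 'I_n -> 'I_k) (a b : R)
    (w : sample n) : R :=
  \prod_(p : 'I_n * 'I_n)
    (if (p.1 < p.2)%N then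
       (if w p then edge_prob comm a b p.1 p.2 else 1 - edge_prob comm a b p.1 p.2)
     else (if w p then 0 else 1)).

Definition sbm_prob {R : realType} {n k : nat} (comm : 'I_n -> 'I_k) (a b : R)
    (E : sample n -> Prop) : R :=
  \sum_(w : sample n | `[< E w >]) sbm_weight comm a b w.

Definition is_graph {R : realType} {n : nat} (A : 'M[R]_n) : Prop :=
  A^T = A /\ (forall i, A i i = 0) /\ (forall i j, A i j = 0 \/ A i j = 1).

Definition semirandom_ok {R : realType} {n k : nat} (comm : 'I_n -> 'I_k)
    (A0 A1 : 'M[R]_n) : Prop :=
  is_graph A1 /\ forall i j,
    (comm i == comm j -> A0 i j <= A1 i j) /\ (comm i != comm j -> A1 i j <= A0 i j).

Definition corrupt_ok {R : realType} {n : nat} (eps : R) (A1 A : 'M[R]_n) : Prop :=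
  is_graph A /\ exists T : {set 'I_n},
    #|T|%:R <= eps * n%:R /\
    forall i j, i \notin T -> j \notin T -> A i j = A1 i j.

Definition eps_corruption {R : realType} {n k : nat} (comm : 'I_n -> 'I_k) (eps : R)
    (A0 A : 'M[R]_n) : Prop :=
  exists A1, semirandom_ok comm A0 A1 /\ corrupt_ok eps A1 A.

Definition chi_property {R : realType} (chi : R) : Prop :=
  forall (n k : nat) (comm : 'I_n -> 'I_k) (a b : R),
    (0 < n)%N -> 0 <= b -> b < a -> a <= n%:R ->
    let C := (Num.sqrt a - Num.sqrt b) ^+ 2 in
    1 - 2 / (n%:R ^+ 2) <=
    sbm_prob comm a b (fun w => exists S : {set 'I_n},
      (1 - expR (- (2 * C))) * n%:R <= #|S|%:R /\
      opnorm_le (restrict S (adj_of w - ((a + b) / (2 * n%:R)) *: Jmat n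
                                     - ((a - b) / (2 * n%:R)) *: Lmat comm))
                (chi * Num.sqrt (a + b))).

(* Main.v *)
Require Import Defs.
From HB Require Import structures.
From mathcomp Require Import all_boot all_order all_algebra.
From mathcomp Require Import boolp reals sequences exp.
From mathcomp Require Import ring lra.
Import Order.TTheory GRing.Theory Num.Theory.
Set Implicit Arguments. Unset Strict Implicit. Unset Printing Implicit Defensive.
Local Open Scope ring_scope.



Section QF.
Variables (R : realType) (n : nat).

Definition qf (Y : 'M[R]_n) (x : 'I_n -> R) := \sum_i \sum_j x i * Y i j * x j.
Definition bil (Y : 'M[R]_n) (x y : 'I_n -> R) := \sum_i \sum_j x i * Y i j * y j.
Definition nrm2 (x : 'I_n -> R) := \sum_i x i ^+ 2.

Lemma qf_mx (Y : 'M[R]_n) (x : 'cV[R]_n) :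
  (x^T *m Y *m x) 0 0 = qf Y (fun i => x i 0).
Proof.
rewrite /qf mxE; under eq_bigr do rewrite mxE mulr_suml.
rewrite exchange_big /=; apply: eq_bigr => i _; apply: eq_bigr => j _.
by rewrite mxE.
Qed.

Lemma nrm2_ge0 x : 0 <= nrm2 x.
Proof. by apply: sumr_ge0 => i _; rewrite sqr_ge0. Qed.

Lemma qfD Y1 Y2 x : qf (Y1 + Y2) x = qf Y1 x + qf Y2 x.
Proof.
rewrite /qf -big_split; apply: eq_bigr => i _ /=; rewrite -big_split.
by apply: eq_bigr => j _ /=; rewrite mxE; ring.
Qed.

Lemma qfN Y x : qf (- Y) x = - qf Y x.
Proof.
rewrite /qf -sumrN; apply: eq_bigr => i _; rewrite -sumrN.
by apply: eq_bigr => j _ /=; rewrite mxE; ring.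
Qed.

Lemma qf_scal1 (l : R) x : qf (l *: 1%:M) x = l * nrm2 x.
Proof.
rewrite /qf /nrm2 mulr_sumr; apply: eq_bigr => i _.
rewrite (bigD1 i) //= big1 => [|j /negbTE ji].
  by rewrite !mxE eqxx mulr1n addr0; ring.
by rewrite !mxE eq_sym ji mulr0n mulr0 mulr0 mul0r.
Qed.

Definition qbound (Y : 'M[R]_n) (l : R) := forall x, `|qf Y x| <= l * nrm2 x.

Lemma loewner_qbound (N : 'M[R]_n) l :
  loewner_le (- l *: (1%:M : 'M[R]_n)) N -> loewner_le N (l *: 1%:M) ->
  N^T = N /\ qbound N l.
Proof.
move=> [T1 P1] [T2 P2]; split.
  move: T2; rewrite !linearB /= linearZ /= trmx1 => T2.
  by apply: oppr_inj; apply: (addrI (l *: 1%:M)).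
move=> x; pose xv := \col_i x i.
have := P1 xv; have := P2 xv; rewrite !qf_mx.
have -> : (fun i => xv i 0) = x by apply: funext => i; rewrite mxE.
rewrite scaleNr opprK !qfD !qfN qf_scal1 => h1 h2.
rewrite ler_norml; apply/andP; split; lra.
Qed.

Lemma qbound_loewner (N : 'M[R]_n) l :
  N^T = N -> qbound N l ->
  loewner_le (- l *: (1%:M : 'M[R]_n)) N /\ loewner_le N (l *: 1%:M).
Proof.
move=> NT hb; split; split.
- by rewrite scaleNr opprK !linearD /= linearZ /= trmx1 NT.
- move=> x; rewrite qf_mx scaleNr opprK qfD qf_scal1.
  have := hb (fun i => x i 0); rewrite ler_norml => /andP[h1 h2]; lra.
- by rewrite !linearB /= linearZ /= trmx1 NT.
- move=> x; rewrite qf_mx qfD qfN qf_scal1.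
  have := hb (fun i => x i 0); rewrite ler_norml => /andP[h1 h2]; lra.
Qed.

End QF.



Section QF2.
Variables (R : realType) (n : nat).

Lemma amgm2 (l y z : R) : 0 < l -> 2 * l * `|y * z| <= l ^+ 2 * y ^+ 2 + z ^+ 2.
Proof.
move=> l0; rewrite normrM -[y ^+ 2](real_normK (num_real y)) -[z ^+ 2](real_normK (num_real z)).
have := sqr_ge0 (l * `|y| - `|z|); nra.
Qed.

Lemma opnorm_qbound (Z : 'M[R]_n) l : opnorm_le Z l -> 0 < l -> qbound Z l.
Proof.
move=> [_ hZ] l0 y; pose yv := \col_i y i.
have E : qf Z y = \sum_i y i * (Z *m yv) i 0.
  apply: eq_bigr => i _; rewrite mxE mulr_sumr; apply: eq_bigr => j _.
  by rewrite mxE mulrA.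
have hy : \sum_i (yv i 0) ^+ 2 = nrm2 y by apply: eq_bigr => i _; rewrite mxE.
have := hZ yv; rewrite hy => hz.
rewrite E.
have h1 : 2 * l * `|\sum_i y i * (Z *m yv) i 0| <=
   l ^+ 2 * nrm2 y + \sum_i ((Z *m yv) i 0) ^+ 2.
  apply: le_trans (_ : 2 * l * \sum_i `|y i * (Z *m yv) i 0| <= _).
    rewrite ler_pM2l ?ler_norm_sum //; lra.
  rewrite mulr_sumr /nrm2 mulr_sumr -big_split /=; apply: ler_sum => i _.
  exact: amgm2.
have : 2 * l * `|\sum_i y i * (Z *m yv) i 0| <= 2 * l * (l * nrm2 y) by lra.
by rewrite ler_pM2l //; lra.
Qed.

End QF2.



Section QF3.
Variables (R : realType) (n : nat).

Definition blockmx m (h : 'I_n -> 'I_m) (G : {set 'I_n}) (Z : 'M[R]_n) : 'M[R]_n :=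
  \matrix_(i, j) (if (i \in G) && (j \in G) && (h i == h j) then Z i j else 0).

Lemma qf_block m (h : 'I_n -> 'I_m) G Z x :
  qf (blockmx h G Z) x =
  \sum_c qf Z (fun i => if (i \in G) && (h i == c) then x i else 0).
Proof.
rewrite /qf [RHS]exchange_big; apply: eq_bigr => i _ /=.
rewrite [RHS]exchange_big; apply: eq_bigr => j _ /=.
rewrite mxE (bigD1 (h i)) //= big1 => [|c hc]; last first.
  by rewrite eq_sym (negbTE hc) andbF !mul0r.
rewrite eqxx andbT addr0.
case: (i \in G); case: (j \in G) => /=; rewrite ?mulr0 ?mul0r //.
by rewrite eq_sym; case: (h j == h i); rewrite ?mulr0 ?mul0r.
Qed.

Lemma qbound_block m (h : 'I_n -> 'I_m) G Z l :
  qbound Z l -> 0 <= l -> qbound (blockmx h G Z) l.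
Proof.
move=> hZ l0 x; rewrite qf_block.
apply: le_trans (ler_norm_sum _ _ _) _.
apply: le_trans (_ : \sum_c l * nrm2 (fun i => if (i \in G) && (h i == c) then x i else 0) <= _).
  by apply: ler_sum => c _; apply: hZ.
rewrite -mulr_sumr ler_wpM2l //.
rewrite /nrm2 exchange_big; apply: ler_sum => i _ /=.
rewrite (bigD1 (h i)) //= big1 => [|c hc]; last first.
  by rewrite eq_sym (negbTE hc) andbF expr0n.
rewrite eqxx andbT addr0; case: (i \in G) => //; by rewrite expr0n sqr_ge0.
Qed.

Lemma bil_sym (Y : 'M[R]_n) u v : Y^T = Y -> bil Y u v = bil Y v u.
Proof.
move=> YT; rewrite /bil exchange_big; apply: eq_bigr => i _; apply: eq_bigr => j _.
have -> : Y j i = Y i j by rewrite -[in LHS]YT mxE.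
by ring.
Qed.

Lemma polar (Y : 'M[R]_n) l u v : Y^T = Y -> qbound Y l ->
  2 * bil Y u v <= l * (nrm2 u + nrm2 v).
Proof.
move=> YT hY.
have E : qf Y (fun i => u i + v i) - qf Y (fun i => u i - v i) =
    2 * bil Y u v + 2 * bil Y v u.
  rewrite /qf /bil !mulr_sumr -sumrB -big_split; apply: eq_bigr => i _ /=.
  rewrite !mulr_sumr -sumrB -big_split; apply: eq_bigr => j _ /=; ring.
have N : nrm2 (fun i => u i + v i) + nrm2 (fun i => u i - v i) =
    2 * nrm2 u + 2 * nrm2 v.
  rewrite /nrm2 !mulr_sumr -!big_split; apply: eq_bigr => i _ /=; ring.
rewrite [bil Y v u](bil_sym _ _ YT) in E.
have h1 := hY (fun i => u i + v i); have h2 := hY (fun i => u i - v i).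
move: h1 h2; rewrite !ler_norml => /andP[h1 h1'] /andP[h2 h2'].
have N' : l * nrm2 (fun i => u i + v i) + l * nrm2 (fun i => u i - v i) =
   2 * (l * (nrm2 u + nrm2 v)) by rewrite -mulrDr N; ring.
lra.
Qed.

Lemma duality (W Y : 'M[R]_n) t l : trace_norm_le W t -> Y^T = Y -> qbound Y l ->
  0 <= l -> \sum_i \sum_j Y i j * W i j <= l * t.
Proof.
move=> [U [V [s [hU hV hs -> ht]]]] YT hY l0.
have WE i j : (U *m diag_mx s *m V^T) i j = \sum_k U i k * s 0 k * V j k.
  rewrite mxE mul_mx_diag; apply: eq_bigr => k _; by rewrite !mxE.
have E : \sum_i \sum_j Y i j * (U *m diag_mx s *m V^T) i j =
    \sum_k s 0 k * bil Y (fun i => U i k) (fun j => V j k).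
  under eq_bigr => i _ do under eq_bigr => j _ do rewrite WE mulr_sumr.
  under eq_bigr => i _ do rewrite exchange_big.
  rewrite exchange_big; apply: eq_bigr => k _ /=.
  rewrite /bil mulr_sumr; apply: eq_bigr => i _; rewrite mulr_sumr.
  apply: eq_bigr => j _; ring.
have unitc (M : 'M[R]_n) k : M^T *m M = 1%:M -> nrm2 (fun i => M i k) = 1.
  move=> hM; have := congr1 (fun X : 'M[R]_n => X k k) hM; rewrite !mxE eqxx mulr1n => <-.
  by apply: eq_bigr => i _; rewrite mxE.
rewrite E; apply: le_trans (_ : \sum_k s 0 k * l <= _).
  apply: ler_sum => k _; rewrite ler_wpM2l //.
  have := polar (fun i => U i k) (fun j => V j k) YT hY.
  rewrite !unitc //; lra.
by rewrite -mulr_suml mulrC ler_wpM2l.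
Qed.

End QF3.



Section HH.
Variables (R : realType) (n k : nat) (h : 'I_n -> 'I_k) (G : {set 'I_n}).

Definition Gc c := [set i in G | h i == c].
Definition mc c : R := #|Gc c|%:R.
Definition uh c : 'cV[R]_n := \col_i (if i \in Gc c then (Num.sqrt (mc c))^-1 else 0).
Definition ec c : 'cV[R]_n := if [pick i in Gc c] is Some f then delta_mx f 0 else 0.
Definition vv c := ec c - uh c.
Definition sq (v : 'cV[R]_n) := (v^T *m v) 0 0.
Definition Pc c := (sq (vv c))^-1 *: (vv c *m (vv c)^T).
Definition Hh : 'M[R]_n := 1%:M - 2 *: \sum_c Pc c.
Definition sv : 'rV[R]_n := \row_j \sum_c (if [pick i in Gc c] == Some j then mc c else 0).

Lemma cardR (A : {set 'I_n}) : (#|A|%:R : R) = \sum_i (if i \in A then 1 else 0).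
Proof. by rewrite -big_mkcond /= sumr_const. Qed.

Lemma dotE (x y : 'cV[R]_n) : (x^T *m y) 0 0 = \sum_i x i 0 * y i 0.
Proof. by rewrite mxE; apply: eq_bigr => i _; rewrite mxE. Qed.

Definition suppin c (x : 'cV[R]_n) := forall i, i \notin Gc c -> x i 0 = 0.

Lemma supp_ec c : suppin c (ec c).
Proof.
rewrite /ec => i hi; case: pickP => [f hf|_]; last by rewrite mxE.
rewrite mxE; case: eqP => [eif|]; last by [].
by move: hi; rewrite eif hf.
Qed.

Lemma supp_uh c : suppin c (uh c).
Proof. by move=> i hi; rewrite mxE (negbTE hi). Qed.

Lemma supp_vv c : suppin c (vv c).
Proof. by move=> i hi; rewrite /vv mxE (supp_ec hi) [X in 0 + X]mxE (supp_uh hi) oppr0 add0r. Qed.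

Lemma dot_orth c d (x y : 'cV[R]_n) : suppin c x -> suppin d y -> c != d ->
  x^T *m y = 0.
Proof.
move=> hx hy cd; apply/matrixP => a b; rewrite (ord1 a) (ord1 b) dotE mxE.
apply: big1 => i _; case: (boolP (i \in Gc c)) => ic; last by rewrite hx // mul0r.
rewrite hy ?mulr0 //; move: ic; rewrite /Gc !inE => /andP[_ /eqP hic].
by rewrite hic andbC; move: cd => /negbTE ->.
Qed.

Lemma mc_ge0 c : 0 <= mc c.
Proof. by rewrite /mc ler0n. Qed.

Lemma sq_uh c : sq (uh c) = if [pick i in Gc c] is Some f then 1 else 0.
Proof.
rewrite /sq dotE.
have -> : \sum_i uh c i 0 * uh c i 0 =
  \sum_i (if i \in Gc c then (mc c)^-1 else 0).
  apply: eq_bigr => i _; rewrite !mxE; case: (i \in Gc c); last by rewrite mulr0.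
  by rewrite -invfM -expr2 sqr_sqrtr // mc_ge0.
case: pickP => [f hf|h0].
  rewrite -big_mkcond /= sumr_const -/(mc c) -mulr_natl mulfV //.
  by rewrite /mc pnatr_eq0 -lt0n card_gt0; apply/set0Pn; exists f.
by rewrite big1 // => i _; rewrite h0.
Qed.


Lemma sq_ec c : sq (ec c) = if [pick i in Gc c] is Some f then 1 else 0.
Proof.
rewrite /sq dotE /ec; case: pickP => [f hf|_]; last by rewrite big1 // => i _; rewrite mxE mulr0.
rewrite (bigD1 f) //= big1 => [|i hi]; first by rewrite !mxE eqxx /= mulr1 addr0.
by rewrite !mxE (negbTE hi) /= mulr0.
Qed.

Lemma two_dot c : 2 * ((vv c)^T *m ec c) 0 0 = sq (vv c).
Proof.
have := sq_ec c; rewrite -sq_uh /sq !dotE => E.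
apply/eqP; rewrite -subr_eq0 mulr_sumr -sumrB.
have -> : \sum_i (2 * (vv c i 0 * ec c i 0) - vv c i 0 * vv c i 0) =
   \sum_i (ec c i 0 * ec c i 0 - uh c i 0 * uh c i 0).
  apply: eq_bigr => i _.
  have -> : vv c i 0 = ec c i 0 - uh c i 0 by rewrite /vv !mxE.
  ring.
by rewrite sumrB E subrr.
Qed.

Lemma sq0 (v : 'cV[R]_n) : sq v = 0 -> v = 0.
Proof.
rewrite /sq dotE => /eqP; rewrite psumr_eq0 => [/allP hv|i _]; last first.
  by rewrite -expr2 sqr_ge0.
apply/matrixP => i j; rewrite (ord1 j) mxE.
by have := hv i (mem_index_enum _); rewrite -expr2 sqrf_eq0 => /eqP.
Qed.

Lemma Pc_ec_orth c d : c != d -> Pc c *m ec d = 0.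
Proof.
move=> cd; rewrite /Pc -scalemxAl -mulmxA (dot_orth (supp_vv (c:=c)) (supp_ec (c:=d)) cd).
by rewrite mulmx0 scaler0.
Qed.

Lemma Pc_ec c : 2 *: (Pc c *m ec c) = vv c.
Proof.
rewrite /Pc -scalemxAl -mulmxA (mx11_scalar (_ *m ec c)) mul_mx_scalar.
rewrite !scalerA.
have [s0|s0] := eqVneq (sq (vv c)) 0.
  by rewrite (sq0 s0) !scaler0.
by rewrite mulrAC two_dot mulfV // scale1r.
Qed.

Lemma Hh_ec c : Hh *m ec c = uh c.
Proof.
rewrite /Hh mulmxBl mul1mx -scalemxAl mulmx_suml (bigD1 c) //= big1 => [|d dc].
  by rewrite addr0 Pc_ec /vv opprB addrC subrK.
by apply: Pc_ec_orth.
Qed.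

Lemma Pc_sym c : (Pc c)^T = Pc c.
Proof. by rewrite /Pc linearZ /= trmx_mul trmxK. Qed.

Lemma Hh_sym : Hh^T = Hh.
Proof.
rewrite /Hh linearB /= trmx1 linearZ /= linear_sum /=.
by congr (_ - 2 *: _); apply: eq_bigr => c _; rewrite Pc_sym.
Qed.

Lemma PcPc c d : Pc c *m Pc d = if c == d then Pc c else 0.
Proof.
rewrite /Pc -scalemxAl -scalemxAr !mulmxA -(mulmxA (vv c)).
case: eqVneq => [<-|cd]; last first.
  by rewrite (dot_orth (supp_vv (c:=c)) (supp_vv (c:=d)) cd) mulmx0 mul0mx !scaler0.
rewrite (mx11_scalar (_ *m vv c)) mul_mx_scalar -scalemxAl !scalerA -/(sq (vv c)).
have [s0|s0] := eqVneq (sq (vv c)) 0; first by rewrite s0 invr0 !mul0r.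
by rewrite mulVf // mulr1.
Qed.

Lemma Hh_orth : Hh^T *m Hh = 1%:M.
Proof.
rewrite Hh_sym /Hh mulmxBl mul1mx mulmxBr mulmx1.
rewrite -scalemxAl -scalemxAr scalerA mulmx_suml.
have -> : \sum_c Pc c *m (\sum_d Pc d) = \sum_c Pc c.
  apply: eq_bigr => c _; rewrite mulmx_sumr (bigD1 c) //= big1 => [|d dc].
    by rewrite PcPc eqxx addr0.
  by rewrite PcPc eq_sym (negbTE dc).
set X := \sum_c Pc c.
have -> : (2 * 2) *: X = 2 *: X + 2 *: X by rewrite -scalerDl; congr (_ *: _); ring.
have -> : 2 *: X - (2 *: X + 2 *: X) = - (2 *: X) by rewrite [- (_ + _)]opprD addrA subrr add0r.
by rewrite opprK subrK.
Qed.


Lemma outerE (x y : 'cV[R]_n) i j : (x *m y^T) i j = x i 0 * y j 0.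
Proof. by rewrite mxE big_ord1 mxE. Qed.

Lemma ecE c i : ec c i 0 = if [pick i in Gc c] is Some f then (i == f)%:R else 0.
Proof. by rewrite /ec; case: pickP => [f _|_]; rewrite mxE // eqxx andbT. Qed.

Lemma diag_sv : diag_mx sv = \sum_c mc c *: (ec c *m (ec c)^T).
Proof.
apply/matrixP => i j; rewrite summxE !mxE.
case: (eqVneq i j) => [<-|ij].
  rewrite mulr1n; apply: eq_bigr => c _; rewrite mxE outerE !ecE.
  case: pickP => [f hf|_]; last by rewrite mulr0 mulr0.
  rewrite /=; case: (eqVneq f i) => [->|fi]; first by rewrite eqxx mulr1 mulr1.
  have -> : (Some f == Some i) = false by apply/eqP => -[e]; move: fi; rewrite e eqxx.
  by rewrite mul0r mulr0.
rewrite mulr0n; symmetry; apply: big1 => c _; rewrite mxE outerE !ecE.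
case: pickP => [f hf|_]; last by rewrite mulr0 mulr0.
case: (eqVneq i f) => [eif|]; last by rewrite mul0r mulr0.
by rewrite -eif eq_sym (negbTE ij) mulr0 mulr0.
Qed.

Lemma mc_neq0 c i : i \in Gc c -> mc c != 0.
Proof. by move=> hi; rewrite /mc pnatr_eq0 -lt0n card_gt0; apply/set0Pn; exists i. Qed.

Lemma W_decomp : \sum_c mc c *: (uh c *m (uh c)^T) = blockmx h G (const_mx 1).
Proof.
apply/matrixP => i j; rewrite summxE !mxE (bigD1 (h i)) //= big1 => [|c hc]; last first.
  rewrite mxE outerE [uh c i 0]mxE.
  have -> : (i \in Gc c) = false by rewrite /Gc inE eq_sym (negbTE hc) andbF.
  by rewrite mul0r mulr0.
rewrite addr0 mxE outerE !mxE.
have hiG : (i \in Gc (h i)) = (i \in G) by rewrite /Gc inE eqxx andbT.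
have hjG : (j \in Gc (h i)) = (j \in G) && (h i == h j) by rewrite /Gc inE eq_sym.
rewrite hiG hjG; case: (boolP (i \in G)) => iG; last by rewrite mul0r mulr0.
case: (j \in G) (h i == h j) => [] [] /=; rewrite ?mulr0 //.
have mn := mc_neq0 (c := h i) (i := i); rewrite hiG in mn.
rewrite -invfM -expr2 sqr_sqrtr ?mc_ge0 // mulfV //; exact: mn.
Qed.

Lemma sum_sv : \sum_j sv 0 j <= n%:R.
Proof.
under eq_bigr do rewrite mxE.
rewrite exchange_big /=.
apply: le_trans (_ : \sum_c mc c <= _).
  apply: ler_sum => c _; case: pickP => [f hf|_].
    rewrite (bigD1 f) //= eqxx big1 ?addr0 // => j hj.
    by case: eqP => // - [e]; move: hj; rewrite e eqxx.
  by rewrite big1 ?mc_ge0.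
have -> : \sum_c mc c = \sum_c \sum_i (if (i \in G) && (h i == c) then 1 else 0).
  apply: eq_bigr => c _; rewrite /mc cardR; apply: eq_bigr => i _; by rewrite /Gc inE.
rewrite exchange_big /=.
apply: le_trans (_ : \sum_(i < n) (1 : R) <= _); last by rewrite sumr_const card_ord.
apply: ler_sum => i _; rewrite (bigD1 (h i)) //= big1 => [|c hc]; last first.
  by rewrite eq_sym (negbTE hc) andbF.
by rewrite eqxx andbT addr0; case: (i \in G).
Qed.

Lemma trace_Wst : trace_norm_le (blockmx h G (const_mx (1 : R))) n%:R.
Proof.
exists Hh, Hh, sv; split.
- exact: Hh_orth.
- exact: Hh_orth.
- move=> i; rewrite mxE; apply: sumr_ge0 => c _; case: eqP => // _; exact: mc_ge0.
- rewrite -W_decomp diag_sv Hh_sym mulmx_sumr mulmx_suml; apply: eq_bigr => c _.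
  by rewrite -scalemxAr -scalemxAl !mulmxA -(mulmxA _ (ec c)^T Hh) -[X in _ *m (_ *m X)]Hh_sym -trmx_mul Hh_ec.
- exact: sum_sv.
Qed.

End HH.



Section Det.
Variables (R : realType) (chi : R) (n k : nat) (comm : 'I_n -> 'I_k) (a b : R).
Variables (A0 A1 A W : 'M[R]_n) (S T : {set 'I_n}).
Hypothesis n0 : (0 < n)%N.
Hypothesis ba : b < a.
Let lam := chi * Num.sqrt (a + b).
Hypothesis lam0 : 0 < lam.
Hypothesis gA0 : is_graph A0.
Hypothesis sA1 : semirandom_ok comm A0 A1.
Hypothesis hT : forall i j, i \notin T -> j \notin T -> A i j = A1 i j.
Let E0 := A0 - ((a + b) / (2 * n%:R)) *: Jmat n - ((a - b) / (2 * n%:R)) *: Lmat comm.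
Let Z := restrict S E0.
Hypothesis hZ : opnorm_le Z lam.
Hypothesis hW : sdp_optimal A a b chi W.
Let G := S :\: T.

Let nR : (n%:R : R) != 0.
Proof. by rewrite pnatr_eq0 -lt0n. Qed.

Lemma ZE i j : Z i j = if (i \in S) && (j \in S) then
  A0 i j - (a + b) / (2 * n%:R) - (a - b) / (2 * n%:R) * (if comm i == comm j then 1 else -1)
  else 0.
Proof. by rewrite /Z /E0 !mxE mulr1. Qed.

Lemma Z_sym : Z^T = Z.
Proof.
apply/matrixP => i j; rewrite mxE !ZE (eq_sym (comm j)).
have [AT _] := gA0; have -> : A0 j i = A0 i j by rewrite -[in RHS]AT mxE.
by case: (i \in S); case: (j \in S).
Qed.

Lemma Z_qb : qbound Z lam.
Proof. exact: opnorm_qbound. Qed.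

Lemma GS i : i \in G -> i \in S.
Proof. by rewrite inE => /andP[]. Qed.
Lemma GT i : i \in G -> i \notin T.
Proof. by rewrite inE => /andP[]. Qed.

Lemma blockmx_sym m (h : 'I_n -> 'I_m) (Y : 'M[R]_n) : Y^T = Y -> (blockmx h G Y)^T = blockmx h G Y.
Proof.
move=> YT; apply/matrixP => i j; rewrite !mxE (eq_sym (h j)).
have -> : Y j i = Y i j by rewrite -[in RHS]YT mxE.
by case: (i \in G); case: (j \in G).
Qed.

Definition Fst : 'M[R]_n := \matrix_(i, j)
  (if (i \in G) && (j \in G) && (comm i == comm j) then A1 i j - A0 i j else 0).

Lemma graph01 (M : 'M[R]_n) i j : is_graph M -> 0 <= M i j <= 1.
Proof. by move=> [_ [_ h]]; case: (h i j) => ->; rewrite ?lexx ?ler01. Qed.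

Lemma Wst_feasible : sdp_feasible A a b chi (blockmx comm G (const_mx 1)) Fst.
Proof.
have [gA1 hA1] := sA1.
have HE : hadamard (A - (a / n%:R) *: Jmat n - Fst) (blockmx comm G (const_mx 1))
          = blockmx comm G Z.
  apply/matrixP => i j; rewrite !mxE.
  case: (boolP ((i \in G) && (j \in G) && (comm i == comm j))) => hij; last by rewrite mulr0.
  move: (hij) => /andP[/andP[iG jG] cij].
  rewrite (GS iG) (GS jG) cij hT ?GT //= !mulr1.
  by field.
split.
- by move=> i j; rewrite !mxE; case: ifP; rewrite ?lexx ?ler01.
- move=> i j; rewrite mxE; case: ifP => [/andP[_ cij]|_]; last by rewrite lexx ler01.
  have [h1 _] := hA1 i j; have := h1 cij.
  have := graph01 i j gA0; have := graph01 i j gA1.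
  have [_ [_ ha0]] := gA0; have [_ [_ ha1]] := gA1.
  case: (ha0 i j) => ->; case: (ha1 i j) => -> //= *; lra.
- exact: trace_Wst.
- rewrite HE; have [] := qbound_loewner (blockmx_sym comm Z_sym)
    (qbound_block comm G Z_qb (ltW lam0)) => //.
- rewrite HE; have [] := qbound_loewner (blockmx_sym comm Z_sym)
    (qbound_block comm G Z_qb (ltW lam0)) => //.
Qed.


Lemma qbound_opp (Y : 'M[R]_n) l : qbound Y l -> qbound (- Y) l.
Proof. by move=> hY x; rewrite qfN normrN. Qed.

Lemma qf_ones (Y : 'M[R]_n) : qf Y (fun _ => 1) = \sum_i \sum_j Y i j.
Proof. by apply: eq_bigr => i _; apply: eq_bigr => j _; rewrite mul1r mulr1. Qed.

Lemma nrm2_ones : nrm2 (fun _ : 'I_n => (1 : R)) = n%:R.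
Proof. by rewrite /nrm2 expr1n sumr_const card_ord. Qed.

Definition h0 := fun _ : 'I_n => (ord0 : 'I_1).

Lemma offG_bound :
  (a - b) / n%:R * \sum_i \sum_j
     (if (i \in G) && (j \in G) && (comm i != comm j) then W i j else 0)
  <= 4 * lam * n%:R.
Proof.
have [[F hF] hopt] := hW.
move: hF; rewrite /sdp_feasible /= => -[W01 F01 trW L1 L2].
set N := hadamard (A - (a / n%:R) *: Jmat n - F) W.
have [NT Nqb] := loewner_qbound L1 L2.
set X1 := \sum_i \sum_j blockmx h0 G Z i j * W i j.
set X2 := \sum_i \sum_j blockmx comm G Z i j * W i j.
set Y1 := \sum_i \sum_j blockmx h0 G N i j.
set Y2 := \sum_i \sum_j blockmx comm G N i j.
have hX1 : X1 <= lam * n%:R.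
  apply: duality trW (blockmx_sym h0 Z_sym) (qbound_block h0 G Z_qb (ltW lam0)) (ltW lam0).
have hX2 : - X2 <= lam * n%:R.
  have sN : (- blockmx comm G Z)^T = - blockmx comm G Z.
    by rewrite linearN /= blockmx_sym // Z_sym.
  have := duality trW sN
     (qbound_opp (qbound_block comm G Z_qb (ltW lam0))) (ltW lam0).
  have -> : - X2 = \sum_i \sum_j (- blockmx comm G Z) i j * W i j.
    rewrite /X2 -sumrN; apply: eq_bigr => i _; rewrite -sumrN; apply: eq_bigr => j _.
    by rewrite [in RHS]mxE mulNr.
  by [].
have hY1 : - (lam * n%:R) <= Y1.
  have := qbound_block h0 G Nqb (ltW lam0) (fun _ => 1).
  by rewrite qf_ones nrm2_ones ler_norml => /andP[].
have hY2 : Y2 <= lam * n%:R.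
  have := qbound_block comm G Nqb (ltW lam0) (fun _ => 1).
  by rewrite qf_ones nrm2_ones ler_norml => /andP[].
apply: le_trans (_ : X1 - X2 - (Y1 - Y2) <= _); last by lra.
rewrite mulr_sumr /X1 /X2 /Y1 /Y2 -!sumrB; apply: ler_sum => i _.
rewrite mulr_sumr -!sumrB; apply: ler_sum => j _.
rewrite !mxE.
case: (boolP (i \in G)) => iG /=; last by rewrite !mul0r mulr0 !subrr.
case: (boolP (j \in G)) => jG /=; last by rewrite !mul0r mulr0 !subrr.
case: (boolP (comm i == comm j)) => cij /=; first by rewrite mulr0 !subrr.
rewrite mul0r !subr0.
have [gA1 hA1] := sA1.
have hA : A1 i j <= A0 i j by have [_ h2] := hA1 i j; exact: h2.
have hF0 : 0 <= F i j by have /andP[] := F01 i j.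
have hW0 : 0 <= W i j by have /andP[] := W01 i j.
rewrite (GS iG) (GS jG) /= hT ?GT //.
have hd : 0 <= (A0 i j - A1 i j + F i j) * W i j by apply: mulr_ge0; lra.
have -> : (A0 i j - (a + b) / (2 * n%:R) * 1 - (a - b) / (2 * n%:R) * -1) * W i j -
   (A1 i j - a / n%:R * 1 - F i j) * W i j =
   (a - b) / n%:R * W i j + (A0 i j - A1 i j + F i j) * W i j by field.
lra.
Qed.


Lemma card_comm : \sum_c (#|[set i | comm i == c]|%:R : R) ^+ 2 =
  \sum_i \sum_j (if comm i == comm j then 1 else 0).
Proof.
under eq_bigr do rewrite cardR expr2 mulr_suml.
under eq_bigr do under eq_bigr do rewrite mulr_sumr.
rewrite exchange_big; apply: eq_bigr => i _ /=.
rewrite exchange_big; apply: eq_bigr => j _ /=.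
rewrite (bigD1 (comm i)) //= big1 => [|c hc]; last by rewrite !inE eq_sym (negbTE hc) mul0r.
by rewrite !inE eqxx mul1r addr0 eq_sym.
Qed.

Lemma sum_GG : \sum_i \sum_j (if (i \in G) && (j \in G) then 1 else 0) = (#|G|%:R : R) ^+ 2.
Proof.
rewrite cardR expr2 mulr_suml; apply: eq_bigr => i _; rewrite mulr_sumr.
by apply: eq_bigr => j _; case: (i \in G); case: (j \in G); rewrite ?mulr1 ?mulr0 ?mul0r.
Qed.

Lemma det_main :
  let gc := n%:R - #|G|%:R in
  \sum_i \sum_(j | comm i != comm j) W i j <= 4 * lam * n%:R ^+ 2 / (a - b) + 2 * n%:R * gc /\
  \sum_c (#|[set i | comm i == c]|%:R : R) ^+ 2 - 4 * n%:R * gc - 4 * lam * n%:R ^+ 2 / (a - b)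
   <= \sum_i \sum_(j | comm i == comm j) W i j.
Proof.
move=> gc.
have [[F hF] hopt] := hW.
have W01 : forall i j, 0 <= W i j <= 1.
  by move: hF; rewrite /sdp_feasible /= => -[].
set offG := \sum_i \sum_j
     (if (i \in G) && (j \in G) && (comm i != comm j) then W i j else 0).
have hab : 0 < a - b by rewrite subr_gt0.
have n0' : (0 : R) < n%:R by rewrite ltr0n.
have hoffG : offG <= 4 * lam * n%:R ^+ 2 / (a - b).
  have := offG_bound; rewrite -/offG => h.
  have -> : offG = n%:R / (a - b) * ((a - b) / n%:R * offG).
    by field; apply/andP; split => //; rewrite subr_eq0 gt_eqF.
  apply: le_trans (_ : n%:R / (a - b) * (4 * lam * n%:R) <= _).
    by rewrite ler_wpM2l // divr_ge0 // ltW.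
  by rewrite le_eqVlt; apply/orP; left; apply/eqP; field; rewrite subr_eq0 gt_eqF.
set out := \sum_i \sum_j (1 - (if (i \in G) && (j \in G) then 1 else 0) : R).
have hG : (#|G|%:R : R) <= n%:R by rewrite ler_nat -[X in (_ <= X)%N]card_ord max_card.
have hG0 : (0 : R) <= #|G|%:R by rewrite ler0n.
have hout : out <= 2 * n%:R * gc.
  have -> : out = n%:R ^+ 2 - #|G|%:R ^+ 2.
    have e1 : \sum_(i < n) \sum_(j < n) (1:R) = n%:R ^+ 2.
      under eq_bigr do rewrite sumr_const card_ord.
      by rewrite sumr_const card_ord expr2 mulr_natr.
    rewrite -sum_GG -e1 /out -sumrB; apply: eq_bigr => i _; by rewrite sumrB.
  rewrite /gc; nra.
have hoff : \sum_i \sum_(j | comm i != comm j) W i j <= offG + out.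
  rewrite /offG /out -big_split; apply: ler_sum => i _ /=.
  rewrite big_mkcond -big_split; apply: ler_sum => j _ /=.
  have := W01 i j; case: (i \in G); case: (j \in G); case: (comm i != comm j) => /=;
    move=> /andP[? ?]; lra.
have hval := hopt _ _ (Wst_feasible).
have hsame : \sum_i \sum_j (if comm i == comm j then 1 else 0) <=
   sdp_value (blockmx comm G (const_mx (1 : R))) + out.
  rewrite /sdp_value /out -big_split; apply: ler_sum => i _ /=.
  rewrite -big_split; apply: ler_sum => j _ /=; rewrite !mxE.
  case: (i \in G); case: (j \in G); case: (comm i == comm j) => /=; lra.
have hsplit : sdp_value W = \sum_i \sum_(j | comm i == comm j) W i j +
    \sum_i \sum_(j | comm i != comm j) W i j.
  rewrite /sdp_value -big_split; apply: eq_bigr => i _ /=; exact: bigID.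
rewrite card_comm; split; lra.
Qed.

End Det.



Section Num.
Variables (R : realType) (chi a b : R).
Hypothesis b0 : 0 <= b.
Hypothesis ba : b < a.
Hypothesis chi0 : 0 <= chi.
Hypothesis chi2 : 1 / 2 <= chi ^+ 2.
Let C := (Num.sqrt a - Num.sqrt b) ^+ 2.
Ltac prep := have b0' := b0; have ba' := ba; have chi0' := chi0; have chi2' := chi2.

Lemma sab : Num.sqrt b < Num.sqrt a.
Proof. prep; by rewrite ltr_sqrt //; lra. Qed.

Lemma sqrtC : Num.sqrt C = Num.sqrt a - Num.sqrt b.
Proof. by rewrite /C sqrtr_sqr ger0_norm // subr_ge0 ltW // sab. Qed.

Lemma C0 : 0 < C.
Proof. rewrite /C exprn_gt0 // subr_gt0; exact: sab. Qed.

Lemma lam_le : chi * Num.sqrt (a + b) / (a - b) <= chi / Num.sqrt C.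
Proof.
prep; rewrite sqrtC.
have sa := sqr_sqrtr (ltW (le_lt_trans b0 ba)).
have sb := sqr_sqrtr b0.
have h1 := sab.
have ha0 := sqrtr_ge0 a; have hb0 := sqrtr_ge0 b.
have hab : Num.sqrt (a + b) <= Num.sqrt a + Num.sqrt b.
  rewrite -[X in _ <= X]ger0_norm ?addr_ge0 // -sqrtr_sqr ler_sqrt ?sqr_ge0 //.
  rewrite sqrrD sa sb; have := mulr_ge0 ha0 hb0; lra.
have -> : a - b = (Num.sqrt a - Num.sqrt b) * (Num.sqrt a + Num.sqrt b).
  by rewrite -[in LHS]sa -[in LHS]sb; ring.
have hd : 0 < Num.sqrt a - Num.sqrt b by rewrite subr_gt0.
have hs : 0 < Num.sqrt a + Num.sqrt b by lra.
rewrite -subr_ge0.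
have -> : chi / (Num.sqrt a - Num.sqrt b) -
  chi * Num.sqrt (a + b) / ((Num.sqrt a - Num.sqrt b) * (Num.sqrt a + Num.sqrt b)) =
  chi * (Num.sqrt a + Num.sqrt b - Num.sqrt (a + b)) /
   ((Num.sqrt a - Num.sqrt b) * (Num.sqrt a + Num.sqrt b)).
  by field; rewrite !gt_eqF.
apply: divr_ge0; last by rewrite mulr_ge0 // ltW.
by apply: mulr_ge0 => //; lra.
Qed.

Lemma e_le : 2 * expR (- (2 * C)) <= chi / Num.sqrt C.
Proof.
prep; have c0 := C0.
set E2 := expR (2 * C).
have hE : 1 + 2 * C <= E2 by apply: expR_ge1Dx.
have E0 : 0 < E2 by apply: expR_gt0.
have sC0 : 0 < Num.sqrt C by rewrite sqrtr_gt0.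
have sCC := sqr_sqrtr (ltW c0).
have key : 2 * Num.sqrt C <= chi * E2.
  have h4 : (2 * Num.sqrt C) ^+ 2 <= (chi * E2) ^+ 2.
    rewrite !exprMn sCC.
    have : 8 * C <= E2 ^+ 2 by have := sqr_ge0 (1 - 2 * C); nra.
    nra.
  have := mulr_ge0 chi0 (ltW E0); nra.
rewrite expRN -/E2.
rewrite -subr_ge0.
have -> : chi / Num.sqrt C - 2 * E2^-1 = (chi * E2 - 2 * Num.sqrt C) / (Num.sqrt C * E2).
  by field; rewrite !gt_eqF.
by apply: divr_ge0; [lra | apply: mulr_ge0; apply: ltW].
Qed.

Lemma final_num (nn g s t eps off same Sig : R) :
  0 < nn -> s - t <= g -> (1 - expR (- (2 * C))) * nn <= s -> t <= eps * nn ->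
  off <= 4 * (chi * Num.sqrt (a + b)) * nn ^+ 2 / (a - b) + 2 * nn * (nn - g) ->
  Sig - 4 * nn * (nn - g) - 4 * (chi * Num.sqrt (a + b)) * nn ^+ 2 / (a - b) <= same ->
  off <= (5 * chi / Num.sqrt C + 2 * eps) * nn ^+ 2 /\
  Sig - (6 * chi / Num.sqrt C + 4 * eps) * nn ^+ 2 <= same.
Proof.
prep; move=> n0 hg hs ht hoff hsame.
set e := expR (- (2 * C)) in hs.
set q := chi / Num.sqrt C.
have hL := lam_le; have he := e_le; rewrite -/e -/q in he hL.
set L := chi * Num.sqrt (a + b) / (a - b) in hL.
have e1 : 4 * (chi * Num.sqrt (a + b)) * nn ^+ 2 / (a - b) = 4 * L * nn ^+ 2.
  by rewrite /L; field; rewrite subr_eq0 gt_eqF.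
rewrite e1 in hoff hsame.
have m5 : 5 * chi / Num.sqrt C = 5 * q by rewrite /q mulrA.
have m6 : 6 * chi / Num.sqrt C = 6 * q by rewrite /q mulrA.
rewrite m5 m6.
have hgc : nn - g <= (e + eps) * nn by lra.
have n2 : 0 <= nn ^+ 2 by rewrite sqr_ge0.
have p1 : L * nn ^+ 2 <= q * nn ^+ 2 by rewrite ler_wpM2r.
have p2 : nn * (nn - g) <= nn * ((e + eps) * nn) by rewrite ler_wpM2l // ltW.
have p3 : (2 * e) * nn ^+ 2 <= q * nn ^+ 2 by rewrite ler_wpM2r.
have p4 : nn * ((e + eps) * nn) = e * nn ^+ 2 + eps * nn ^+ 2 by ring.
split; lra.
Qed.

End Num.



Lemma adj_graph (R : realType) n (w : sample n) : is_graph (adj_of w : 'M[R]_n).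
Proof.
split; [|split].
- apply/matrixP => i j; rewrite !mxE; case: (ltngtP i j) => //.
- by move=> i; rewrite mxE ltnn.
- move=> i j; rewrite mxE.
  case: (i < j)%N; first by case: (w (i, j)); [right|left].
  case: (j < i)%N; first by case: (w (j, i)); [right|left].
  by left.
Qed.

Lemma sbm_weight_ge0 (R : realType) n k (comm : 'I_n -> 'I_k) (a b : R) w :
  0 <= b -> b < a -> a <= n%:R -> 0 <= sbm_weight comm a b w.
Proof.
move=> b0 ba an; apply: prodr_ge0 => p _.
have n0 : (0 : R) < n%:R by apply: lt_le_trans an; apply: le_lt_trans ba.
have ep : 0 <= edge_prob comm a b p.1 p.2 <= 1.
  rewrite /edge_prob; case: ifP => _; rewrite divr_ge0 ?ler0n //=;
  rewrite ?ler_pdivrMr // ?mul1r; lra.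
case: ifP => _; case: (w p); lra.
Qed.

Lemma sbm_mono (R : realType) n k (comm : 'I_n -> 'I_k) (a b : R) (E E' : sample n -> Prop) :
  0 <= b -> b < a -> a <= n%:R -> (forall w, E w -> E' w) ->
  sbm_prob comm a b E <= sbm_prob comm a b E'.
Proof.
move=> b0 ba an hE; rewrite /sbm_prob !(big_mkcond (fun w => `[< _ >])).
apply: ler_sum => w _.
case: (boolP `[< E w >]) => h.
  by rewrite (asboolT (hE _ (asboolW h))).
by case: ifP => _; rewrite ?lexx ?sbm_weight_ge0.
Qed.

Lemma prob_ex (R : realType) n k (comm : 'I_n -> 'I_k) (a b : R) (E : sample n -> Prop) :
  0 < sbm_prob comm a b E -> exists w, E w.
Proof.
move=> hp; apply: contrapT => hne; move: hp.
rewrite /sbm_prob big1 ?ltxx // => w' /asboolW hw.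
by exfalso; apply: hne; exists w'.
Qed.

Lemma chi_lb (R : realType) (chi : R) : chi_property chi -> 0 <= chi /\ 1 / 2 <= chi ^+ 2.
Proof.
move=> hP.
have := hP 2%N 1%N (fun _ => ord0) 2 0 isT (lexx 0) ltac:(by rewrite ltr0n) (lexx _).
set C := _ ^+ 2; move=> hpr.
have C0 : 0 < C.
  rewrite /C sqrtr0 subr0 sqr_sqrtr ?ler0n //.
have hp0 : (0 : R) < 1 - 2 / (2%:R ^+ 2).
  have -> : (2%:R : R) ^+ 2 = 4 by rewrite expr2 -natrM.
  lra.
have [w [S [hS [hop0 hop]]]] := prob_ex (lt_le_trans hp0 hpr).
have Spos : (0 < #|S|)%N.
  rewrite -(ltr_nat R); apply: lt_le_trans hS; apply: mulr_gt0; last by [].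
  by rewrite subr_gt0 expR_lt1 oppr_lt0 mulr_gt0.
have [i iS] : exists i, i \in S by apply/set0Pn; rewrite -card_gt0.
have := hop (delta_mx i 0).
have -> : \sum_j ((delta_mx i 0 : 'cV[R]_2) j 0) ^+ 2 = 1.
  rewrite (bigD1 i) //= big1 => [|j hj]; first by rewrite !mxE eqxx /= expr1n addr0.
  by rewrite mxE (negbTE hj) /= expr0n.
rewrite -colE mulr1 => h.
set M := restrict _ _ in h.
have hM : M i i = -1.
  by rewrite /M !mxE iS /= ltnn; field.
have h2 : (M i i) ^+ 2 <= \sum_j ((col i M) j 0) ^+ 2.
  rewrite (bigD1 i) //=; have -> : col i M i 0 = M i i by rewrite [LHS]mxE.
  rewrite lerDl; apply: sumr_ge0 => j _; exact: sqr_ge0.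
rewrite hM in h2.
have s2 : Num.sqrt (2 + 0 : R) ^+ 2 = 2 by rewrite addr0 sqr_sqrtr.
have sp : 0 < Num.sqrt (2 + 0 : R) by rewrite sqrtr_gt0 addr0.
rewrite exprMn s2 in h.
split; last by nra.
move: hop0; rewrite pmulr_lge0 //.
Qed.

Unset Implicit Arguments. Set Strict Implicit.

Theorem mainTheorem10 (R : realType) (chi : R) (n k : nat) (comm : 'I_n -> 'I_k)
    (a b eps : R) (adv : sample n -> 'M[R]_n) :
  chi_property chi ->
  (0 < n)%N -> 0 <= b -> b < a -> a <= n%:R ->
  (forall w : sample n, eps_corruption comm eps (adj_of w) (adv w)) ->
  let C := (Num.sqrt a - Num.sqrt b) ^+ 2 in
  1 - 2 / (n%:R ^+ 2) <=
  sbm_prob comm a b (fun w => forall W : 'M[R]_n, sdp_optimal (adv w) a b chi W ->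
    (\sum_i \sum_(j | comm i != comm j) W i j
       <= (5 * chi / Num.sqrt C + 2 * eps) * n%:R ^+ 2) /\
    (\sum_(c : 'I_k) (#|[set i | comm i == c]|%:R : R) ^+ 2
       - (6 * chi / Num.sqrt C + 4 * eps) * n%:R ^+ 2
       <= \sum_i \sum_(j | comm i == comm j) W i j)).
Proof.
move=> hchi n0 b0 ba an hadv; cbv zeta.
have [chi0 chi2] := chi_lb hchi.
have hp := hchi n k comm a b n0 b0 ba an; cbv zeta in hp.
apply: le_trans hp _.
apply: sbm_mono => // w [S [hS hop]] W hWopt.
have [A1 [sA1 [gA [T [hT hAT]]]]] := hadv w.
have chip : 0 < chi.
  rewrite lt_neqAle chi0 andbT; apply/eqP => c0; move: chi2; rewrite -c0; lra.
have lam0 : 0 < chi * Num.sqrt (a + b).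
  by rewrite mulr_gt0 // sqrtr_gt0; lra.
have := det_main n0 ba lam0 (@adj_graph R n w) sA1 hAT hop hWopt.
move=> /= [h1 h2].
have hg : (#|S|%:R : R) - #|T|%:R <= #|S :\: T|%:R.
  rewrite lerBlDr -natrD ler_nat -(cardsID T S) addnC leq_add2l.
  by apply: subset_leq_card; apply: subsetIr.
have n0R : (0 : R) < n%:R by rewrite ltr0n.
have := final_num b0 ba chi0 chi2 n0R hg hS hT h1 h2.
move=> hf; exact hf.
Qed.
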